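(* Let $N \ge 1$ be an integer and let $a, b$ be $N$-bit integers in two's complement representation, with bits $a_0 a_1 \cdots a_{N-1}$ and $b_0 b_1 \cdots b_{N-1}$, where bit $0$ is the most significant bit. Define the bipolar encodings $\hat{a}_j = 2a_j - 1 \in \{-1,+1\}$ and $\hat{b}_j = 2b_j - 1 \in \{-1,+1\}$ for $0 \le j \le N-1$. For each $i$ with $0 \le i \le N-1$ set \[ D_i = \sum_{j=i}^{N-1} \bigl(\hat{a}_j - \hat{b}_j\bigr)\, 2^{N-2-j}, \qquad P = 2^{N-1-i}, \] \[ z_1 = D_i + P + 1,\quad z_2 = D_i + P,\quad z_3 = -D_i,\quad z_4 = -D_i - 1,\quad z_5 = D_i - P + 1,\quad z_6 = D_i - P, \] and \[ r_i = 2\bigl[\mathrm{ReLU}(z_1) - \mathrm{ReLU}(z_2) + \mathrm{ReLU}(z_3) - \mathrm{ReLU}(z_4) + \mathrm{ReLU}(z_5) - \mathrm{ReLU}(z_6)\bigr] - 3, \] where $\mathrm{ReLU}(t) = \max(t,0)$. Then for every $i \in \{0,\dots,N-1\}$ we have $r_i \in \{-1,+1\}$, and $r_i = 2c_i - 1$, where $c_i$ is bit $i$ (bit $0$ being the most significant) of the $N$-bit two's complement representation of $a - b$ (computed modulo $2^N$).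
   Context: Bipolar encoding maps a binary digit $0$ to $-1$ and $1$ to $+1$. An $N$-bit two's complement integer is represented by its bit string $b_0 b_1\cdots b_{N-1}$ with $b_0$ the most significant bit; the difference $a-b$ is taken in $N$-bit two's complement arithmetic, i.e. modulo $2^N$ (wrapping on overflow). *)

(* Defs.v *)
From mathcomp Require Import all_boot all_order all_algebra.
Set Implicit Arguments. Unset Strict Implicit. Unset Printing Implicit Defensive.
Import Order.TTheory GRing.Theory Num.Theory.

(* An N-bit word: bits indexed by 'I_N, bit 0 = most significant bit. *)

Definition bipolar {R : numDomainType} (x : bool) : R := (2 * x%:R - 1)%R.

Definition relu {R : numDomainType} (t : R) : R := Num.max t 0%R.

Definition tc_val (N : nat) (a : 'I_N -> bool) : int :=
  (\sum_(j < N) (if val j == 0%N then -1 else 1) * (a j)%:Z * (2 ^ (N.-1 - j))%:Z)%R.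

Definition tc_bit (N : nat) (z : int) (i : 'I_N) : bool :=
  odd ((`|(z %% (2 ^ N)%:Z)%Z|)%N %/ 2 ^ (N.-1 - i)).

Definition sub_bits (N : nat) (a b : 'I_N -> bool) (i : 'I_N) : bool :=
  tc_bit (tc_val a - tc_val b)%R i.

Local Open Scope ring_scope.

(* D_i = sum_{j=i}^{N-1} (â_j - b̂_j) 2^(N-2-j)  (integer exponent, may be -1) *)
Definition Dsum {R : numFieldType} (N : nat) (a b : 'I_N -> bool) (i : 'I_N) : R :=
  \sum_(j < N | (i <= j)%N) (bipolar (a j) - bipolar (b j)) * (2%:R : R) ^ (N%:Z - 2 - j%:Z).

Definition r_out {R : numFieldType} (N : nat) (a b : 'I_N -> bool) (i : 'I_N) : R :=
  let D : R := Dsum a b i in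
  let P : R := (2%:R : R) ^+ (N - 1 - i) in
  let z1 := D + P + 1 in
  let z2 := D + P in
  let z3 := - D in
  let z4 := - D - 1 in
  let z5 := D - P + 1 in
  let z6 := D - P in
  2 * (relu z1 - relu z2 + relu z3 - relu z4 + relu z5 - relu z6) - 3.

(* Main.v *)
Require Import Defs.
From mathcomp Require Import all_boot all_order all_algebra.
From mathcomp Require Import zify ring lra.
Import Order.TTheory GRing.Theory Num.Theory.
Local Open Scope ring_scope.

Lemma relu_step (R : realFieldType) (x : R) (z : int) :
  x = z%:~R -> relu (x + 1) - relu x = ((0 <= z)%R : bool)%:R.
Proof.
move=> ->; rewrite /relu !maxEle.
have [hz|hz] := lerP 0 z.
- have h0 : 0 <= (z%:~R : R) by rewrite ler0z.
  case: ifP => h1; case: ifP => h2 /=; lra.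
- have h0 : (z%:~R : R) + 1 <= 0.
    have h : z + 1 <= 0 by lia.
    by rewrite -(lerz0 R) intrD in h.
  case: ifP => h1; case: ifP => h2 /=; lra.
Qed.

Lemma key_nat (P r k : nat) : (0 < P)%N -> (r < 2*P)%N ->
  odd ((r + k*(2*P)) %/ P) = (P <= r)%N.
Proof.
move=> hP hr.
rewrite addnC mulnA divnMDl // oddD oddM /= andbF /=.
have : (r %/ P < 2)%N by rewrite ltn_divLR // mulnC.
case: (leqP P r) => h.
- have : (1 <= r %/ P)%N by rewrite divn_gt0.
  by case: (r %/ P)%N => [|[|]].
- by rewrite divn_small.
Qed.

Lemma key_int (P n : nat) (D k : int) : (0 < P)%N ->
  - (2 * P%:Z) < D -> D < 2 * P%:Z -> n%:Z = D + k * (2 * P%:Z) ->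
  odd (n %/ P)%N = (P%:Z <= D) || ((- P%:Z <= D) && (D < 0)).
Proof.
move=> hP h1 h2 hn.
have [hD|hD] := lerP 0 D.
- have hk : 0 <= k by nia.
  have -> : n = (`|D| + `|k| * (2 * P))%N.
    apply/eqP; rewrite -eqz_nat; apply/eqP; rewrite hn.
    rewrite PoszD PoszM gez0_abs // gez0_abs //.
  rewrite key_nat //; last by lia.
  rewrite andbF orbF; lia.
- have hk : 1 <= k by nia.
  have -> : n = (`|(D + 2 * P%:Z)%R| + `|(k - 1)%R| * (2 * P))%N.
    apply/eqP; rewrite -eqz_nat; apply/eqP; rewrite hn.
    rewrite PoszD PoszM gez0_abs; last by lia. rewrite gez0_abs; last by lia. rewrite PoszM; ring.
  rewrite key_nat //; last by lia.
  rewrite andbT. lia.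
Qed.

Lemma count3 (P : nat) (D : int) : (0 < P)%N ->
  - (2 * P%:Z) < D -> D < 2 * P%:Z ->
  (((0 <= D + P%:Z)%R : bool) + ((0 <= - D - 1)%R : bool) + ((0 <= D - P%:Z)%R : bool))%N
  = ((((P%:Z <= D) || ((- P%:Z <= D) && (D < 0)))%R : bool) + 1)%N.
Proof.
move=> hP h1 h2.
have [e1|e1] := lerP 0 (D + P%:Z);
have [e2|e2] := lerP 0 (- D - 1);
have [e3|e3] := lerP 0 (D - P%:Z);
have [e4|e4] := lerP P%:Z D;
have [e5|e5] := lerP (- P%:Z) D;
have [e6|e6] := ltrP D 0 => //=; lia.
Qed.

Definition Alow (N : nat) (a : 'I_N -> bool) (i : 'I_N) : nat :=
  (\sum_(j < N | (i <= j)%N) (a j : nat) * 2 ^ (N - 1 - j))%N.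

Arguments Alow {N}.

Lemma geo (n d : nat) : (d <= n)%N ->
  (\sum_(n - d <= j < n) 2 ^ (n - 1 - j) + 1 = 2 ^ d)%N.
Proof.
elim: d => [|d IH] hd.
  by rewrite subn0 big_geq.
rewrite big_ltn; last by lia.
have -> : (n - d.+1).+1 = (n - d)%N by lia.
rewrite -addnA IH; last by lia.
have -> : (n - 1 - (n - d.+1) = d)%N by lia.
by rewrite expnS; lia.
Qed.

Lemma Alow_lt N (a : 'I_N -> bool) (i : 'I_N) : (Alow a i < 2 ^ (N - i))%N.
Proof.
apply: (@leq_ltn_trans (\sum_(j < N | (i <= j)%N) 2 ^ (N - 1 - j))%N).
  by apply: leq_sum => j _; case: (a j); rewrite ?mul1n ?mul0n.
have := @geo N (N - i) (leq_subr _ _).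
rewrite subKn; last exact: ltnW (ltn_ord i).
rewrite big_geq_mkord => <-.
by rewrite addn1.
Qed.

Lemma Dsum_eq (R : realFieldType) N (a b : 'I_N -> bool) (i : 'I_N) :
  Dsum (R := R) a b i = ((Alow a i)%:Z - (Alow b i)%:Z)%:~R.
Proof.
have nz : forall n : nat, ((n%:Z)%:~R : R) = n%:R by [].
rewrite /Dsum /Alow intrB !nz !natr_sum -sumrB.
apply: eq_bigr => j _.
have hj := ltn_ord j.
have e : (N%:Z - 2 - j%:Z) = (N - 1 - j)%N%:Z + (-1) by lia.
have h2 : (2 : R) != 0 by rewrite pnatr_eq0.
rewrite e expfzDr //.
have -> : (2 : R) ^ ((N - 1 - j)%N%:Z) = 2 ^+ (N - 1 - j) by [].
have -> : (2 : R) ^ (-1) = 2^-1 by [].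
rewrite /bipolar !natrM !natrX.
by field.
Qed.

Lemma dvd_pow (c : int) (d e : nat) : (d <= e)%N ->
  ((2 ^ d)%N%:Z %| c * (2 ^ e)%N%:Z)%Z.
Proof.
move=> h; apply: dvdz_mull; rewrite dvdzE /=; exact: dvdn_exp2l.
Qed.

Lemma tc_dvd N (a : 'I_N -> bool) (i : 'I_N) :
  ((2 ^ (N - i))%N%:Z %| tc_val a - (Alow a i)%:Z)%Z.
Proof.
have nz : forall n : nat, ((n%:Z)%:~R : int) = n%:Z by move=> n; rewrite intz.

rewrite /tc_val /Alow -[X in _ - X]nz sumMz [X in _ - X]big_mkcond /= -sumrB.
apply: rpred_sum => j _.
have hj := ltn_ord j; have hi := ltn_ord i.
rewrite nz.
case: eqP => [j0|jn0].
- case: leqP => hij.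
  + have i0 : (i : nat) = 0%N by lia.
    have -> : (-1 * (a j)%:Z * (2 ^ (N.-1 - j))%:Z - ((a j : nat) * 2 ^ (N - 1 - j))%N%:Z)
            = - (a j)%:Z * (2 ^ (N - i))%N%:Z.
      rewrite i0 j0 subn0 subn0 PoszM.
      have -> : N = N.-1.+1 by lia.
      rewrite /= subn1 /= expnS PoszM; ring.
    exact: dvd_pow.
  + rewrite subr0.
    have -> : (-1 * (a j)%:Z * (2 ^ (N.-1 - j))%:Z) = (- (a j)%:Z) * (2 ^ (N.-1 - j))%:Z by ring.
    apply: dvd_pow; lia.
- case: leqP => hij.
  + have -> : (N.-1 - j = N - 1 - j)%N by lia.
    by rewrite PoszM mul1r subrr dvdz0.
  + rewrite subr0 mul1r; apply: dvd_pow; lia.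
Qed.

Theorem proposition1 (R : realFieldType) (N : nat) (hN : (1 <= N)%N)
    (a b : 'I_N -> bool) (i : 'I_N) :
  (r_out (R := R) a b i = 1 \/ r_out (R := R) a b i = -1) /\
  r_out (R := R) a b i = bipolar (sub_bits a b i).
Proof.
set P := (2 ^ (N - 1 - i))%N.
set D : int := (Alow a i)%:Z - (Alow b i)%:Z.
have hi := ltn_ord i.
have hP : (0 < P)%N by rewrite expn_gt0.
have e2P : (2 ^ (N - i))%N = (2 * P)%N.
  by rewrite /P -expnS; congr (2 ^ _)%N; lia.
have hA := Alow_lt _ a i; have hB := Alow_lt _ b i.
rewrite e2P in hA hB.
have hD1 : - (2 * P%:Z) < D by rewrite /D; lia.
have hD2 : D < 2 * P%:Z by rewrite /D; lia.
have hbit : sub_bits a b i = (P%:Z <= D) || ((- P%:Z <= D) && (D < 0)).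
  rewrite /sub_bits /tc_bit.
  set x := tc_val a - tc_val b.
  set d := (2 ^ N)%N%:Z.
  set m := (x %% d)%Z.
  have hd0 : d != 0 by rewrite /d; rewrite eqz_nat expn_eq0.
  have hm0 : 0 <= m by apply: modz_ge0.
  have hdvd : ((2 ^ (N - i))%N%:Z %| m - D)%Z.
    have -> : m - D = (tc_val a - (Alow a i)%:Z) - (tc_val b - (Alow b i)%:Z)
                      - (x %/ d)%Z * d.
      have hx := divz_eq x d; rewrite -/m in hx.
      move: (x %/ d)%Z hx => q hx.
      have -> : m = x - q * d by rewrite hx; ring.
      rewrite /x /D; ring.
    have ha := tc_dvd _ a i; have hb := tc_dvd _ b i.
    rewrite rpredB //; first by rewrite rpredB.
    apply: dvdz_mull; rewrite /d dvdzE /=; apply: dvdn_exp2l; exact: leq_subr.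
  have [k hk] := dvdzP hdvd.
  have hn : (`|m|%N)%:Z = D + k * (2 * P%:Z).
    rewrite gez0_abs // -[m](subrK D) hk e2P PoszM; ring.
  have -> : (N.-1 - i)%N = (N - 1 - i)%N by lia.
  exact: key_int hn.
have hPR : (2 : R) ^+ (N - 1 - i) = (P%:Z)%:~R.
  by rewrite /P -[RHS]/((2 ^ (N - 1 - i))%N%:R) natrX.
have e1 := @relu_step R ((D%:~R : R) + (2 : R) ^+ (N - 1 - i)) (D + P%:Z) ltac:(by rewrite hPR intrD).
have e2 := @relu_step R (- (D%:~R : R) - 1) (- D - 1) ltac:(by rewrite [RHS]intrB intrN).
rewrite subrK in e2.
have e3 := @relu_step R ((D%:~R : R) - (2 : R) ^+ (N - 1 - i)) (D - P%:Z) ltac:(by rewrite hPR intrB).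
have hc := @count3 P D hP hD1 hD2.
have hc' := congr1 (fun n : nat => (n%:R : R)) hc.
rewrite /= !natrD in hc'.
have hr : r_out (R := R) a b i = 2 * (((P%:Z <= D) || ((- P%:Z <= D) && (D < 0)) : bool)%:R + 1) - 3.
  rewrite -hc' -e1 -e2 -e3 /r_out /= Dsum_eq -/D hPR.
  ring.
rewrite hr hbit /bipolar.
case: (_ || _) => /=; split; try lra.
Qed.
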